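(* Let $n\ge 2$ and let $\sigma$ be a uniformly random permutation of $E(G_n)$. Then the probability that $B(G_n,\sigma)$ is not odd is in $\mathcal{O}\left(\frac{\log^{2}n}{n}\right)$ as $n\to\infty$.
   Context: $G_n$ is the graph with vertex set $\{1,\dots,2n\}$ and edge set $\{\{i,i+1\}: 1\le i\le 2n-1\}\cup\{\{2n,1\}\}\cup\{\{i,i+n\}: 1\le i\le n\}$; it is $3$-regular. For a permutation $\sigma$ of $E(G_n)$, $B(G_n,\sigma)$ is the bipartite graph with parts $V_B=V(G_n)\times\{0,1\}$ and $W_B=E(G_n)$ and edge set $\{\{(v,0),e\}: v\in e\}\cup\{\{(v,1),e\}: v\in\sigma(e)\}$. A bipartite graph with parts $V,W$ in which every vertex of $V$ has degree $3$ is called odd if for every nonempty $X\subseteq W$ there is some $v\in V$ with $|X\cap N(v)|$ odd. *)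

(* Defs.v *)
From mathcomp Require Import all_boot all_fingroup.
From Stdlib Require Import Reals.

Set Implicit Arguments.
Unset Strict Implicit.
Unset Printing Implicit Defensive.

(* Vertices of G_n: 'I_(2*n), vertex v (0-based) stands for v+1.
   Edges of G_n: 'I_(3*n), labelled as follows:
     k < 2n        : the cycle edge {k, (k+1) mod 2n}   (i.e. {k+1, k+2}, and {2n,1})
     k = 2n + i    : the chord {i, i+n}  for i < n      (i.e. {i+1, i+1+n})
   For n >= 2 these 3n edges are pairwise distinct, so this labelling is a
   bijection 'I_(3*n) -> E(G_n). *)
Definition edge_mem (n v k : nat) : bool :=
  if (k < 2 * n)%N then (v == k) || (v == (k.+1 %% (2 * n))%N)
  else (v == k - 2 * n)%N || (v == k - 2 * n + n)%N.

(* The bipartite graph B(G_n, sigma): V_B = V(G_n) x {0,1} (false = 0, true = 1),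
   W_B = E(G_n); (v,0) ~ e iff v in e, (v,1) ~ e iff v in sigma(e). *)
Definition B_adj (n : nat) (sigma : {perm 'I_(3 * n)})
    (x : 'I_(2 * n) * bool) (e : 'I_(3 * n)) : bool :=
  if x.2 then edge_mem n x.1 (sigma e) else edge_mem n x.1 e.

Definition odd_bipartite (V W : finType) (adj : V -> W -> bool) : bool :=
  [forall X : {set W}, (X != set0) ==>
     [exists v : V, odd #|[set w in X | adj v w]|]].

Definition prob_not_odd (n : nat) : R :=
  (INR #|[set sigma : {perm 'I_(3 * n)} | ~~ odd_bipartite (B_adj sigma)]|
   / INR #|{perm 'I_(3 * n)}|)%R.

(* Main.v *)
Require Import Defs.
From mathcomp Require Import all_boot all_fingroup.
From Stdlib Require Import Reals.
From Stdlib Require Import Lra.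
From mathcomp Require Import zify.

Set Implicit Arguments.
Unset Strict Implicit.
Unset Printing Implicit Defensive.


Lemma sum_delta (f : nat -> bool) m a : a < m ->
  \sum_(0 <= k < m) (f k && (k == a)) = f a.
Proof.
elim: m => [|m IH] ha //.
rewrite big_nat_recr //=.
case: (ltngtP a m) => h.
- by rewrite IH // andbF addn0.
- lia.
- subst a; rewrite andbT big1_seq ?add0n // => k /andP[_]; rewrite mem_iota.
  move=> hk; rewrite (_ : k == m = false) ?andbF //; apply/eqP; lia.
Qed.

Section G.
Variable n : nat.
Hypothesis n2 : 1 < n.
Implicit Types X Y : {set 'I_(3*n)}.

Definition xm (X : {set 'I_(3*n)}) k := [exists e in X, val e == k].

Lemma xmE X (e : 'I_(3*n)) : xm X e = (e \in X).
Proof.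
apply/existsP/idP => [[e' /andP[He' /eqP/val_inj <-]] // | He].
by exists e; rewrite He eqxx.
Qed.

Lemma xm_ge X k : 3*n <= k -> xm X k = false.
Proof.
move=> hk; apply/existsP => [[e /andP[_ /eqP he]]].
move: hk; rewrite -he leqNgt. by rewrite ltn_ord.
Qed.

Lemma cardX X : #|X| = \sum_(0 <= k < 3*n) xm X k.
Proof.
rewrite -sum1_card big_mkcond /= big_mkord.
by apply: eq_bigr => i _; rewrite xmE; case: (i \in X).
Qed.

Lemma card_edge X (v : 'I_(2*n)) :
  #|[set e in X | edge_mem n v e]| = \sum_(0 <= k < 3*n) (xm X k && edge_mem n v k).
Proof.
rewrite -sum1_card big_mkcond /= big_mkord.
by apply: eq_bigr => i _; rewrite inE xmE; case: (_ && _).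
Qed.

Lemma odd_edge X (v : 'I_(2*n)) a b c :
  a < 3*n -> b < 3*n -> c < 3*n -> a != b -> a != c -> b != c ->
  (forall k, k < 3*n -> edge_mem n v k = [|| k == a, k == b | k == c]) ->
  odd #|[set e in X | edge_mem n v e]| = xm X a (+) xm X b (+) xm X c.
Proof.
move=> ha hb hc hab hac hbc he.
rewrite card_edge.
rewrite (eq_big_nat _ _ (F2 := fun k => (xm X k && (k == a)) + (xm X k && (k == b))
   + (xm X k && (k == c)))); last first.
  move=> k /andP[_ hk]; rewrite he //.
  case ea: (k == a); case eb: (k == b); case ec: (k == c);
   rewrite /= ?andbF ?andbT ?addn0 ?add0n //; try lia.
rewrite !big_split /= !sum_delta //.
by rewrite !oddD !oddb.
Qed.

Definition pb i := if i == 0 then (2*n).-1 else i.-1.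

Lemma edge_low (i : nat) k : i < n -> k < 3*n ->
  edge_mem n i k = [|| k == i, k == pb i | k == 2*n + i].
Proof.
move=> hi hk; rewrite /edge_mem /pb; case: ifP => h.
  case: (k.+1 =P 2 * n) => e.
    rewrite e modnn. case: (i =P 0) => h'; apply/idP/idP; lia.
  rewrite modn_small; last lia. case: (i =P 0) => h'; apply/idP/idP; lia.
case: (i =P 0) => h'; apply/idP/idP; lia.
Qed.

Lemma edge_high (i : nat) k : i < n -> k < 3*n ->
  edge_mem n (i + n) k = [|| k == i + n, k == (i + n).-1 | k == 2*n + i].
Proof.
move=> hi hk; rewrite /edge_mem; case: ifP => h.
  case: (k.+1 =P 2 * n) => e.
    rewrite e modnn. apply/idP/idP; lia.
  rewrite modn_small; last lia. apply/idP/idP; lia.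
apply/idP/idP; lia.
Qed.

Definition evenset (X : {set 'I_(3*n)}) :=
  [forall v : 'I_(2*n), ~~ odd #|[set e in X | edge_mem n v e]|].

Lemma even_low X i : evenset X -> i < n ->
  xm X i (+) xm X (pb i) (+) xm X (2*n + i) = false.
Proof.
move=> /forallP hX hi.
have hv : i < 2 * n by lia.
have := hX (Ordinal hv); rewrite (@odd_edge _ _ i (pb i) (2*n+i)) /=.
- by move/negbTE.
- lia. - rewrite /pb; case: ifP; lia. - lia.
- rewrite /pb; case: ifP => *; apply/eqP; lia.
- apply/eqP; lia.
- rewrite /pb; case: ifP => *; apply/eqP; lia.
- by move=> k hk; exact: edge_low.
Qed.

Lemma even_high X i : evenset X -> i < n ->
  xm X (i + n) (+) xm X (i + n).-1 (+) xm X (2*n + i) = false.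
Proof.
move=> /forallP hX hi.
have hv : i + n < 2 * n by lia.
have := hX (Ordinal hv); rewrite (@odd_edge _ _ (i + n) (i + n).-1 (2*n+i)) /=.
- by move/negbTE.
- lia. - lia. - lia.
- apply/eqP; lia. - apply/eqP; lia. - apply/eqP; lia.
- by move=> k hk; exact: edge_high.
Qed.

End G.


Lemma sum_shift (F : nat -> nat) a m :
  \sum_(a <= k < a + m) F k = \sum_(0 <= k < m) F (k + a).
Proof. rewrite -{1}[a]add0n big_addn. by rewrite addnC addnK. Qed.

Section G.
Variable n : nat.
Hypothesis n2 : 1 < n.
Implicit Types X Y : {set 'I_(3*n)}.

Local Notation xm := (@xm n).
Local Notation evenset := (@evenset n).
Local Notation pb := (@pb n).

Definition tX X := xm X 0 (+) xm X n.

Lemma tXE X : tX X = xm X 0 (+) xm X n.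
Proof. by []. Qed.

Lemma t_const X : evenset X -> forall i, i < n -> xm X i (+) xm X (i + n) = tX X.
Proof.
move=> hX; elim=> [|i IH] hi //.
have H1 := even_low n2 hX hi.
have H2 := even_high n2 hX hi.
rewrite /pb /= addSn /= in H1 H2.
have := IH (ltnW hi).
move: H1 H2; rewrite -/(tX X).
case: (xm X i.+1); case: (xm X i); case: (xm X (i.+1 + n)); case: (xm X (i + n));
 case: (xm X (2 * n + i.+1)); case: (tX X) => //.
Qed.

Lemma xm_mid X i : evenset X -> i < n -> xm X (i + n) = xm X i (+) tX X.
Proof.
move=> hX hi; rewrite -(t_const hX hi).
by case: (xm X i); case: (xm X (i + n)).
Qed.

Lemma xm_chord X i : evenset X -> i < n -> xm X (2 * n + i) = xm X i (+) xm X (pb i).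
Proof.
move=> hX hi; have := even_low n2 hX hi.
by case: (xm X i); case: (xm X (pb i)); case: (xm X (2 * n + i)).
Qed.

Lemma even_inj X Y : evenset X -> evenset Y ->
  (forall i, i < n -> xm X i = xm Y i) -> xm X n = xm Y n -> X = Y.
Proof.
move=> hX hY hlow hn.
have ht : tX X = tX Y by rewrite /tX hn hlow //; lia.
have h2 : forall k, k < 2 * n -> xm X k = xm Y k.
  move=> k hk; case: (ltnP k n) => hkn; first exact: hlow.
  have -> : k = (k - n) + n by lia.
  rewrite !xm_mid //; try lia. by rewrite ht hlow //; lia.
have h3 : forall k, k < 3 * n -> xm X k = xm Y k.
  move=> k hk; case: (ltnP k (2 * n)) => hkn; first exact: h2.
  have -> : k = 2 * n + (k - 2 * n) by lia.
  rewrite !xm_chord //; try lia.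
  rewrite hlow; last lia. rewrite h2 //. rewrite /pb; case: ifP; lia.
apply/setP => e; rewrite -!xmE; exact: h3.
Qed.

Lemma cardX3 X : #|X| = \sum_(0 <= k < n) xm X k + \sum_(0 <= k < n) xm X (k + n)
  + \sum_(0 <= k < n) xm X (k + 2 * n).
Proof.
rewrite cardX (big_cat_nat _ (n := 2 * n)) //=; last lia.
rewrite (big_cat_nat _ (n := n)) //=; last lia.
have -> : 2 * n = n + n by lia.
rewrite sum_shift.
have -> : 3 * n = (n + n) + n by lia.
by rewrite sum_shift.
Qed.

Lemma t_true X : evenset X -> tX X = true -> n <= #|X| <= 2 * n.
Proof.
move=> hX ht; rewrite cardX3.
have e1 : \sum_(0 <= k < n) xm X k + \sum_(0 <= k < n) xm X (k + n) = n.
  rewrite -big_split /=.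
  rewrite (eq_big_nat _ _ (F2 := fun => 1)); first by rewrite sum_nat_const_nat subn0 muln1.
  move=> k /andP[_ hk]; rewrite xm_mid // ht.
  by case: (xm X k).
have e2 : \sum_(0 <= k < n) xm X (k + 2 * n) <= n.
  apply: leq_trans (_ : \sum_(0 <= k < n) 1 <= _).
    by apply: leq_sum => k _; case: (xm X _).
  by rewrite sum_nat_const_nat subn0 muln1.
lia.
Qed.

Definition pn i := if i == 0 then n.-1 else i.-1.

Lemma card_false X : evenset X -> tX X = false ->
  #|X| = 2 * \sum_(0 <= k < n) xm X k + \sum_(0 <= k < n) (xm X k (+) xm X (pn k)).
Proof.
move=> hX ht; rewrite cardX3.
have e1 : \sum_(0 <= k < n) xm X (k + n) = \sum_(0 <= k < n) xm X k.
  apply: eq_big_nat => k /andP[_ hk]; by rewrite xm_mid // ht addbF.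
have e2 : \sum_(0 <= k < n) xm X (k + 2 * n) = \sum_(0 <= k < n) (xm X k (+) xm X (pn k)).
  apply: eq_big_nat => k /andP[_ hk]; rewrite addnC xm_chord // /pb /pn.
  case: ifP => // _.
  have -> : (2 * n).-1 = n.-1 + n by lia.
  by rewrite xm_mid ?ht ?addbF //; lia.
by rewrite e1 e2; lia.
Qed.

End G.


Section Cyc.
Variable n : nat.
Implicit Types T : {set 'I_n}.

Definition bnd T := [set i : 'I_n | (i \in T) != (ord_pred i \in T)].
Definition delta T := #|bnd T|.

Lemma card_sumI (A : {set 'I_n}) : #|A| = \sum_(i : 'I_n) (i \in A).
Proof. by rewrite -sum1_card big_mkcond /=; apply: eq_bigr => i _; case: (i \in A). Qed.

Definition st T := \sum_(i : 'I_n) ((i \in T) && (ord_pred i \notin T)).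
Definition en T := \sum_(i : 'I_n) ((i \in T) && (ordS i \notin T)).

Lemma delta_split T : delta T = st T + en T.
Proof.
rewrite /delta card_sumI /st /en.
rewrite [X in _ = _ + X](reindex_inj (@ord_pred_inj n)) /=.
rewrite -big_split /=; apply: eq_bigr => i _; rewrite inE ord_predK.
by case: (i \in T); case: (ord_pred i \in T).
Qed.

Lemma st_le T : st T <= #|T|.
Proof. rewrite card_sumI; apply: leq_sum => i _; by case: (i \in T); case: (_ \in T). Qed.

Lemma en_le T : en T <= #|T|.
Proof. rewrite card_sumI; apply: leq_sum => i _; by case: (i \in T); case: (_ \in T). Qed.

Lemma delta_le T : delta T <= 2 * #|T|.
Proof. rewrite delta_split; have := st_le T; have := en_le T; lia. Qed.

Lemma delta_compl T : delta (~: T) = delta T.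
Proof.
rewrite /delta /bnd; apply: eq_card => i; rewrite !inE.
by case: (i \in T); case: (_ \in T).
Qed.

Lemma delta_le_compl T : delta T <= 2 * (n - #|T|).
Proof.
rewrite -delta_compl. have := delta_le (~: T). by rewrite cardsCs setCK card_ord.
Qed.

Lemma delta_F1 T i0 : i0 \in T -> ordS i0 \in T -> delta T + 2 <= 2 * #|T|.
Proof.
move=> h0 h1.
have hs : st T + 1 <= #|T|.
  rewrite /st card_sumI (bigD1 (ordS i0)) //= (bigD1 (ordS i0) (P := predT)) //=.
  rewrite ordSK h0 h1 /= add0n addnC leq_add2l.
  by apply: leq_sum => i _; case: (i \in T); case: (_ \in T).
have he : en T + 1 <= #|T|.
  rewrite /en card_sumI (bigD1 i0) //= (bigD1 i0 (P := predT)) //=.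
  rewrite h0 h1 /= add0n addnC leq_add2l.
  by apply: leq_sum => i _; case: (i \in T); case: (_ \in T).
rewrite delta_split; lia.
Qed.

Lemma delta_F2 T : (forall i, i \in T -> ordS i \notin T) -> 2 * #|T| <= delta T.
Proof.
move=> hT.
have hs : st T = #|T|.
  rewrite /st card_sumI; apply: eq_bigr => i _.
  case hi: (i \in T) => //=.
  case hp: (ord_pred i \in T) => //.
  by have := hT _ hp; rewrite ord_predK hi.
have he : en T = #|T|.
  rewrite /en card_sumI; apply: eq_bigr => i _.
  case hi: (i \in T) => //=.
  by rewrite (negbTE (hT _ hi)).
rewrite delta_split; lia.
Qed.

Lemma ord_pred_S m (h : m < n) (h' : m.+1 < n) : ord_pred (Ordinal h') = Ordinal h.
Proof.
apply: val_inj => /=. by rewrite modnDr modn_small.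

Qed.

Lemma bnd_inj T1 T2 (h0 : 0 < n) : bnd T1 = bnd T2 ->
  (Ordinal h0 \in T1) = (Ordinal h0 \in T2) -> T1 = T2.
Proof.
move=> hb hz.
have key : forall m (h : m < n), (Ordinal h \in T1) = (Ordinal h \in T2).
  elim=> [|m IH] h.
    by rewrite (_ : Ordinal h = Ordinal h0) //; apply: val_inj.
  have hm : m < n by lia.
  have := IH hm.
  have : (Ordinal h \in bnd T1) = (Ordinal h \in bnd T2) by rewrite hb.
  rewrite !inE ord_pred_S.
  by case: (Ordinal h \in T1); case: (Ordinal h \in T2); case: (Ordinal hm \in T1);
    case: (Ordinal hm \in T2).
apply/setP => i; case: i => m h; exact: key.
Qed.

End Cyc.


Section G.
Variable n : nat.
Hypothesis n2 : 1 < n.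
Implicit Types X Y : {set 'I_(3*n)}.

Local Notation xm := (@xm n).
Local Notation evenset := (@evenset n).
Local Notation tX := (@tX n).
Local Notation pn := (@pn n).

Definition Zs := [set X : {set 'I_(3*n)} | evenset X].
Definition Ak k := #|[set X in Zs | #|X| == k]|.
Definition Tset X : {set 'I_n} := [set i : 'I_n | xm X i].

Lemma n0 : 0 < n. Proof. lia. Qed.
Definition i0 : 'I_n := Ordinal n0.

Lemma card_Tset X : #|Tset X| = \sum_(0 <= k < n) xm X k.
Proof. by rewrite card_sumI big_mkord; apply: eq_bigr => i _; rewrite inE. Qed.

Lemma val_ord_pred (i : 'I_n) : val (ord_pred i) = pn i.
Proof.
rewrite /= /pn; case: ifP => /eqP h.
  rewrite h /= modn_small //; lia.
have hi := ltn_ord i.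
have -> : (i + n).-1 = i.-1 + n by lia.
rewrite modnDr modn_small //; lia.
Qed.

Lemma delta_Tset X : delta (Tset X) = \sum_(0 <= k < n) (xm X k (+) xm X (pn k)).
Proof.
rewrite /delta card_sumI big_mkord; apply: eq_bigr => i _; rewrite !inE val_ord_pred.
by case: (xm X i); case: (xm X (pn i)).
Qed.

Lemma card_small X : evenset X -> 1 <= #|X| < n ->
  tX X = false /\ #|X| = 2 * #|Tset X| + delta (Tset X).
Proof.
move=> hX hk.
case ht: (tX X).
  have := t_true n2 hX ht; lia.
by split => //; rewrite card_Tset delta_Tset card_false.
Qed.

Lemma card_le2n X : evenset X -> #|X| <= 2 * n.
Proof.
move=> hX; case ht: (tX X).
  by have := t_true n2 hX ht; lia.
rewrite card_false // -card_Tset -delta_Tset.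
have := delta_le_compl (Tset X).
have : #|Tset X| <= n by rewrite -[n in _ <= n]card_ord max_card.
lia.
Qed.

Definition F1 (T : {set 'I_n}) := [exists i, (i \in T) && (ordS i \in T)].

Definition code (T : {set 'I_n}) : {set 'I_n} * (bool * bool) :=
  (if F1 T then bnd T else T, (F1 T, i0 \in T)).

Lemma code_inj T1 T2 : code T1 = code T2 -> T1 = T2.
Proof.
rewrite /code; case=> h1 h2 h3.
move: h1; rewrite h2; case: (F1 T2) => // hb.
exact: (bnd_inj (h0 := n0)).
Qed.

Lemma Tset_inj X Y : evenset X -> evenset Y -> tX X = false -> tX Y = false ->
  Tset X = Tset Y -> X = Y.
Proof.
move=> hX hY tx ty hT.
have hl : forall i, i < n -> xm X i = xm Y i.
  move=> i hi; have : (Ordinal hi \in Tset X) = (Ordinal hi \in Tset Y) by rewrite hT.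
  by rewrite !inE.
apply: (even_inj n2 hX hY hl).
move: tx ty; rewrite !tXE (hl 0) ?n0 //.
by case: (xm Y 0); case: (xm X n); case: (xm Y n).
Qed.

Definition Qn k := #|[set B : {set 'I_n} | 2 * #|B| + 2 <= k]|.

Lemma Ak_small k : 1 <= k < n -> Ak k <= 4 * Qn k.
Proof.
move=> hk.
set D := [set X in Zs | #|X| == k].
have hinj : {in D &, injective (fun X => code (Tset X))}.
  move=> X Y; rewrite !inE => /andP[hX /eqP cX] /andP[hY /eqP cY] /code_inj.
  apply: Tset_inj => //.
  - by case: (card_small hX (_ : 1 <= #|X| < n)) => //; rewrite cX.
  - by case: (card_small hY (_ : 1 <= #|Y| < n)) => //; rewrite cY.
rewrite /Ak -/D -(card_in_imset hinj).
apply: leq_trans (_ : #|setX [set B : {set 'I_n} | 2 * #|B| + 2 <= k] [set: bool * bool]| <= _).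
  apply: subset_leq_card; apply/subsetP => c /imsetP [X hXD ->].
  move: hXD; rewrite !inE => /andP[hX /eqP cX].
  have hX1 : 1 <= #|X| < n by rewrite cX.
  have [_ hc] := card_small hX hX1; rewrite cX in hc.
  rewrite andbT /code.
  case hF: (F1 (Tset X)).
    case/existsP: hF => i /andP[a b].
    have L : forall t d k, k = 2*t+d -> d + 2 <= 2*t -> 2*d+2 <= k by lia.
    exact: L _ _ _ hc (delta_F1 a b).
  have hF2 : forall i, i \in Tset X -> ordS i \notin Tset X.
    move=> i hi; apply/negP => hs; move: hF; rewrite /F1.
    by move/negbT/existsPn/(_ i); rewrite hi hs.
  have L : forall t d k, 0 < k -> k = 2*t+d -> 2 * t <= d -> d <= 2 * t -> 2*t+2 <= k by lia.
  exact: L _ _ _ (proj1 (andP hk)) hc (delta_F2 hF2) (delta_le _).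
by rewrite cardsX cardsT card_prod card_bool mulnC.
Qed.

Lemma card_setT_pow : #|{set 'I_n}| = expn 2 n.
Proof.
have := card_powerset [set: 'I_n]; rewrite cardsT card_ord => <-.
rewrite -cardsT; apply: eq_card => A; rewrite !inE; by rewrite subsetT.
Qed.

Lemma Zs_card : #|Zs| <= expn 2 n.+1.
Proof.
have hinj : {in Zs &, injective (fun X => (Tset X, xm X n))}.
  move=> X Y; rewrite !inE => hX hY [hT hn].
  apply: (even_inj n2 hX hY _ hn).
  move=> i hi; have : (Ordinal hi \in Tset X) = (Ordinal hi \in Tset Y) by rewrite hT.
  by rewrite !inE.
rewrite -(card_in_imset hinj).
apply: leq_trans (max_card _) _.
by rewrite card_prod card_setT_pow card_bool expnS mulnC.
Qed.

End G.


Section Perm.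
Variable T : finType.
Implicit Types X Y : {set T}.

Lemma card_permT : #|{perm T}| = #|T|`!.
Proof.
rewrite -cardsT -card_perm; apply: eq_card => s.
by rewrite !inE; apply/esym/subsetP => x _; rewrite inE.
Qed.

Lemma mem_tperm_imset x y (Y : {set T}) z : (z \in tperm x y @: Y) = (tperm x y z \in Y).
Proof.
apply/imsetP/idP => [[w hw ->]|h]; first by rewrite tpermK.
by exists (tperm x y z) => //; rewrite tpermK.
Qed.

Lemma perm_trans_ind m : forall X Y, #|X| = #|Y| -> #|X :\: Y| = m ->
  exists s : {perm T}, s @: X = Y.
Proof.
elim: m => [|m IH] X Y hc hm.
  exists 1%g; have hs : X \subset Y by rewrite -setD_eq0 -cards_eq0 hm.
  have e : X =i Y by apply/(subset_cardP hc).
  rewrite (eq_imset _ (g := fun x : T => x)) ?imset_id; last by move=> x; rewrite perm1.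
  by apply/setP => x; rewrite e.
have [x hx] : exists x, x \in X :\: Y by apply/card_gt0P; rewrite hm.
have hYX : #|Y :\: X| = m.+1 by rewrite cardsD setIC -hc -cardsD.
have [y hy] : exists y, y \in Y :\: X by apply/card_gt0P; rewrite hYX.
move: hx hy; rewrite !inE => /andP[xY xX] /andP[yX yY].
set X1 := tperm x y @: X.
have hc1 : #|X1| = #|Y| by rewrite card_imset ?hc //; exact: perm_inj.
have hd : X1 :\: Y = (X :\: Y) :\ x.
  apply/setP => z; rewrite !inE mem_tperm_imset.
  case: tpermP => [->|->|hzx hzy].
  - by rewrite (negbTE xY) (negbTE yX) eqxx.
  - by rewrite yY xX /= andbF.
  - by have -> : (z == x) = false by apply/eqP.
have hm1 : #|X1 :\: Y| = m.
  have := cardsD1 x (X :\: Y); rewrite !inE xY xX hm -hd; lia.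
have [s hs] := IH X1 Y hc1 hm1.
exists (tperm x y * s)%g.
rewrite -hs /X1 -imset_comp; apply: eq_imset => z /=; by rewrite permM.
Qed.

Lemma perm_trans X Y : #|X| = #|Y| -> exists s : {perm T}, s @: X = Y.
Proof. move=> h; exact: (@perm_trans_ind #|X :\: Y|). Qed.

End Perm.

Section Perm2.
Variable T : finType.
Implicit Types X Y : {set T}.

Lemma fiber_le X Y Y' : #|Y| = #|Y'| ->
  #|[set s : {perm T} | s @: X == Y]| <= #|[set s : {perm T} | s @: X == Y']|.
Proof.
move=> h; have [t ht] := perm_trans h.
rewrite -(card_imset _ (mulIg t)).
apply: subset_leq_card; apply/subsetP => u /imsetP [s]; rewrite inE => /eqP hs ->.
rewrite inE -ht -hs -imset_comp; apply/eqP; apply: eq_imset => z /=; by rewrite permM.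
Qed.

Lemma fiber_card X Y : #|X| = #|Y| ->
  #|[set s : {perm T} | s @: X == Y]| * 'C(#|T|, #|X|) = #|T|`!.
Proof.
move=> hXY.
rewrite -card_permT.
have -> : #|{perm T}| = \sum_(s : {perm T}) 1 by rewrite sum1_card.
rewrite (partition_big (fun s : {perm T} => s @: X) (fun Y' => #|Y'| == #|X|)) /=; last first.
  by move=> s _; rewrite card_imset //; exact: perm_inj.
rewrite (eq_bigr (fun _ => #|[set s : {perm T} | s @: X == Y]|)); last first.
  move=> Y' /eqP hY'.
  rewrite (eq_bigl (fun s => s \in [set s : {perm T} | s @: X == Y'])); last first.
    by move=> s; rewrite in_set.
  rewrite sum1_card; apply/eqP; rewrite eqn_leq !fiber_le //; by rewrite hY'.
rewrite sum_nat_const.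
have -> : #|[pred Y' : {set T} | #|Y'| == #|X|]| = 'C(#|T|, #|X|).
  rewrite -card_draws; apply: eq_card => Y'; by rewrite !inE.
by rewrite mulnC.
Qed.

End Perm2.

Lemma card_sumb (I : finType) (p : pred I) : #|[set i | p i]| = \sum_(i : I) p i.
Proof. by rewrite -sum1_card big_mkcond /=; apply: eq_bigr => i _; rewrite inE; case: (p i). Qed.

Lemma union_bound (I J : finType) (A : {set I}) (S : {set J}) (P : I -> J -> bool) :
  (forall i, i \in A -> exists2 j, j \in S & P i j) ->
  #|A| <= \sum_(j in S) #|[set i | P i j]|.
Proof.
move=> hA.
rewrite -sum1_card.
apply: leq_trans (_ : \sum_(i in A) \sum_(j in S) P i j <= _).
  apply: leq_sum => i hi; have [j hj hp] := hA i hi.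
  by rewrite (bigD1 j) //= hp.
apply: leq_trans (_ : \sum_(i : I) \sum_(j in S) P i j <= _).
  rewrite [X in _ <= X](bigID (fun i => i \in A)) /=; exact: leq_addr.
rewrite exchange_big /=; apply: leq_sum => j _; by rewrite card_sumb.
Qed.

Lemma regroup (U : finType) (S : {set {set U}}) (g : nat -> nat) :
  \sum_(X in S) g #|X| = \sum_(k < #|U|.+1) #|[set X in S | #|X| == k]| * g k.
Proof.
rewrite (partition_big (fun X : {set U} => (inord #|X| : 'I_(#|U|.+1))) predT) //=.
apply: eq_bigr => k _.
rewrite -sum_nat_const; apply: eq_big => X.
  rewrite !inE; case: (X \in S) => //=.
  have hX : #|X| < #|U|.+1 by rewrite ltnS max_card.
  apply/eqP/eqP => [<-|h]; first by rewrite inordK.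
  by apply: val_inj; rewrite /= inordK.
move=> /andP[_ /eqP <-].
have hX : #|X| < #|U|.+1 by rewrite ltnS max_card.
by rewrite inordK.
Qed.


Lemma bin_step_up m j : 2 * j.+1 <= m -> 'C(m, j) <= 'C(m, j.+1).
Proof.
move=> h.
have e := mul_bin_left m j.
have : (m - j) * 'C(m, j) <= j.+1 * 'C(m, j.+1) by rewrite e.
move=> h2.
have h3 : j.+1 * 'C(m, j) <= (m - j) * 'C(m, j) by apply: leq_mul => //; lia.
have := leq_trans h3 h2. by rewrite leq_pmul2l.
Qed.

Lemma bin_mono m j j' : j <= j' -> 2 * j' <= m -> 'C(m, j) <= 'C(m, j').
Proof.
move=> hj; elim: j' hj => [|j' IH] hj hm.
  by have -> : j = 0 by lia.
case: (ltnP j j'.+1) => h.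
  apply: leq_trans (IH _ _) (bin_step_up _); lia.
by have -> : j = j'.+1 by lia.
Qed.

Lemma bin_mid n k : n <= k <= 2 * n -> 'C(3 * n, n) <= 'C(3 * n, k).
Proof.
move=> hk.
case: (leqP (2 * k) (3 * n)) => h.
  apply: bin_mono; lia.
rewrite -(@bin_sub (3 * n) k); last lia.
apply: bin_mono; lia.
Qed.

Lemma bin3_step n : 'C(3 * n.+1, n.+1) * (n.+1 * (2 * n).+1 * (2 * n).+2) =
  'C(3 * n, n) * ((3 * n).+1 * (3 * n).+2 * (3 * n).+3).
Proof.
have e1 := mul_bin_diag (3 * n).+1 n.
have e2 := mul_bin_down (3 * n).+2 n.+1.
have e3 := mul_bin_down (3 * n).+3 n.+1.
rewrite /= in e1 e2 e3.
have -> : 3 * n.+1 = (3 * n).+3 by lia.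
have h2 : (3 * n).+2 - n.+1 = (2 * n).+1 by lia.
have h3 : (3 * n).+3 - n.+1 = (2 * n).+2 by lia.
rewrite h2 in e2; rewrite h3 in e3.
move: e1 e2 e3.
move: ('C(3 * n, n)) ('C((3 * n).+1, n.+1)) ('C((3 * n).+2, n.+1)) ('C((3 * n).+3, n.+1)).
move=> a b c d e1 e2 e3.
transitivity (n.+1 * (2*n).+1 * ((2*n).+2 * d)). rewrite ?mulnE ?addnE. ring.
rewrite -e3.
transitivity (n.+1 * (3*n).+3 * ((2*n).+1 * c)). rewrite ?mulnE ?addnE. ring.
rewrite -e2.
transitivity ((3*n).+3 * (3*n).+2 * (n.+1 * b)). rewrite ?mulnE ?addnE. ring.
rewrite -e1. rewrite ?mulnE ?addnE. ring.
Qed.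

Lemma bin3_grow n : 4 <= n -> 6 * 'C(3 * n, n) <= 'C(3 * n.+1, n.+1).
Proof.
move=> hn.
have e := bin3_step n.
have hP : 0 < n.+1 * (2 * n).+1 * (2 * n).+2 by rewrite !muln_gt0.
have hQ : 6 * (n.+1 * (2 * n).+1 * (2 * n).+2) <= (3 * n).+1 * (3 * n).+2 * (3 * n).+3 by nia.
rewrite -(leq_pmul2r hP) e.
move: hQ; move: (n.+1 * (2 * n).+1 * (2 * n).+2) ((3 * n).+1 * (3 * n).+2 * (3 * n).+3) ('C(3 * n, n)) => P Q c hQ.
nia.
Qed.

Lemma bin3_lower n : expn 6 n <= 3 * 'C(3 * n, n).
Proof.
have big : forall m, expn 6 (m + 4) <= 3 * 'C(3 * (m + 4), m + 4).
  elim=> [|m IH]; first by [].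
  rewrite addSn expnS.
  have h := bin3_grow (leq_addl m 4).
  apply: leq_trans (_ : 6 * (3 * 'C(3 * (m + 4), m + 4)) <= _).
    by rewrite leq_mul2l IH orbT.
  by rewrite mulnCA leq_mul2l h orbT.
case: (leqP 4 n) => h.
  have -> : n = (n - 4) + 4 by lia.
  exact: big.
by case: n h => [|[|[|[|]]]].
Qed.

Lemma pow46 n : n * expn 4 n <= expn 6 n.
Proof.
elim: n => [|n IH] //.
rewrite !expnS.
case: (leqP 2 n) => h.
  move: IH; move: (expn 4 n) (expn 6 n) => x y IH; nia.
by case: n h IH => [|[|]].
Qed.

Lemma bin_23 n j : 'C(2 * n, j) * expn 3 j <= 'C(3 * n, j) * expn 2 j.
Proof.
elim: j => [|j IH]; first by rewrite !bin0.
have e1 := mul_bin_left (2 * n) j.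
have e2 := mul_bin_left (3 * n) j.
rewrite -(leq_pmul2l (ltn0Sn j)) !expnS.
move: IH e1 e2; move: ('C(2 * n, j)) ('C(3 * n, j)) ('C(2 * n, j.+1)) ('C(3 * n, j.+1))
  (expn 3 j) (expn 2 j) => a b c d x y IH e1 e2.
have h : 3 * (2 * n - j) <= 2 * (3 * n - j) by lia.
have -> : j.+1 * (c * (3 * x)) = 3 * ((j.+1 * c) * x) by rewrite ?mulnE; ring.
have -> : j.+1 * (d * (2 * y)) = 2 * ((j.+1 * d) * y) by rewrite ?mulnE; ring.
rewrite e1 e2.
move: h; move: (2 * n - j) (3 * n - j) => p q h.
have h1 : p * (a * x) <= p * (b * y) by rewrite leq_mul2l IH orbT.
have h2 : 3 * p * (b * y) <= 2 * q * (b * y) by rewrite leq_mul2r h orbT.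
nia.
Qed.

Lemma pow_cube k : k * k * k * expn 2 k <= 100 * expn 3 k.
Proof.
have big : forall m, (m + 7) * (m + 7) * (m + 7) * expn 2 (m + 7) <= 100 * expn 3 (m + 7).
  elim=> [|m IH]; first by [].
  rewrite addSn !expnS.
  move: IH; move: (expn 2 (m + 7)) (expn 3 (m + 7)) => x y IH.
  have h : 2 * ((m + 7).+1 * (m + 7).+1 * (m + 7).+1) <= 3 * ((m + 7) * (m + 7) * (m + 7)) by nia.
  have h2 : 2 * ((m + 7).+1 * (m + 7).+1 * (m + 7).+1) * x <= 3 * ((m + 7) * (m + 7) * (m + 7)) * x.
    by rewrite leq_mul2r h orbT.
  nia.
case: (leqP 7 k) => h.
  have -> : k = (k - 7) + 7 by lia.
  exact: big.
by case: k h => [|[|[|[|[|[|[|]]]]]]].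
Qed.

Lemma bin_shift2 m j : 'C(m, j.+2) * (j.+2 * j.+1) = 'C(m, j) * ((m - j.+1) * (m - j)).
Proof.
have e1 := mul_bin_left m j.
have e2 := mul_bin_left m j.+1.
move: e1 e2; move: ('C(m, j)) ('C(m, j.+1)) ('C(m, j.+2)) (m - j) (m - j.+1) => a b c p q e1 e2.
transitivity (j.+1 * (j.+2 * c)); first by rewrite ?mulnE; ring.
rewrite e2. transitivity (q * (j.+1 * b)); first by rewrite ?mulnE; ring.
rewrite e1 ?mulnE; ring.
Qed.


Lemma small_ratio n k : 2 <= k < n ->
  16 * ((k - 1) * 'C(2 * n, k - 2)) * (n * n) <= 900 * 'C(3 * n, k).
Proof.
move=> hk.
case: k hk => [|[|j]] // hk.
have -> : j.+2 - 1 = j.+1 by lia.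
have -> : j.+2 - 2 = j by lia.
have h5 := bin_23 n j.
have h7 := bin_shift2 (3 * n) j.
have h6 := pow_cube j.+2.
rewrite !expnS in h6.
have hq : 4 * (n * n) <= (3 * n - j.+1) * (3 * n - j).
  have : 2 * n <= 3 * n - j.+1 by lia.
  have : 2 * n <= 3 * n - j by lia.
  move: (3 * n - j.+1) (3 * n - j) => u v h1 h2.
  have := leq_mul h2 h1. by rewrite mulnACA.
have hx : 0 < expn 3 j by rewrite expn_gt0.
move: h5 h7 h6 hq hx.
move: ('C(2 * n, j)) ('C(3 * n, j)) ('C(3 * n, j.+2)) (expn 3 j) (expn 2 j)
  ((3 * n - j.+1) * (3 * n - j)) (n * n) => a b c x y Q N h1 h2 h3 h4 hx.
have s1 : (a * x) * (64 * j.+1 * N) <= (b * y) * (64 * j.+1 * N) := leq_mul h1 (leqnn _).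
have s2 : (16 * j.+1 * y * b) * (4 * N) <= (16 * j.+1 * y * b) * Q := leq_mul (leqnn _) h4.
have s3 : j.+1 * j.+1 * j.+2 <= j.+2 * j.+2 * j.+2.
  by apply: leq_mul => //; apply: leq_mul.
have s4 : (16 * y * c) * (j.+1 * j.+1 * j.+2) <= (16 * y * c) * (j.+2 * j.+2 * j.+2)
  := leq_mul (leqnn _) s3.
have s5 : (j.+2 * j.+2 * j.+2 * (2 * (2 * y))) * (4 * c) <= (100 * (3 * (3 * x))) * (4 * c)
  := leq_mul h3 (leqnn _).
have E1 : (b * y) * (64 * j.+1 * N) = (16 * j.+1 * y * b) * (4 * N) by rewrite ?mulnE; ring.
have E2 : (16 * j.+1 * y * b) * Q = (16 * y * c) * (j.+1 * j.+1 * j.+2).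
  have : (16 * j.+1 * y) * (b * Q) = (16 * j.+1 * y) * (c * (j.+2 * j.+1)) by rewrite h2.
  move=> e; rewrite ?mulnE in e *; lia.
have E3 : (16 * y * c) * (j.+2 * j.+2 * j.+2) = (j.+2 * j.+2 * j.+2 * (2 * (2 * y))) * (4 * c)
  by rewrite ?mulnE; ring.
have T : (a * x) * (64 * j.+1 * N) <= (100 * (3 * (3 * x))) * (4 * c).
  apply: leq_trans s1 _; rewrite E1; apply: leq_trans s2 _; rewrite E2.
  apply: leq_trans s4 _; rewrite E3; exact: s5.
have E4 : (a * x) * (64 * j.+1 * N) = (16 * (j.+1 * a) * N) * (4 * x) by rewrite ?mulnE; ring.
have E5 : (100 * (3 * (3 * x))) * (4 * c) = (900 * c) * (4 * x) by rewrite ?mulnE; ring.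
rewrite E4 E5 leq_pmul2r in T => //.
by rewrite muln_gt0.
Qed.


Lemma sizes_bound (U : finType) k c : (forall d, d + 2 <= k -> 'C(#|U|, d) <= c) ->
  #|[set A : {set U} | #|A| + 2 <= k]| <= (k - 1) * c.
Proof.
move=> hc.
have := regroup [set A : {set U} | #|A| + 2 <= k] (fun _ => 1).
rewrite sum1_card => ->.
apply: leq_trans (_ : \sum_(d < #|U|.+1) (if d + 2 <= k then c else 0) <= _).
  apply: leq_sum => d _; rewrite muln1.
  case: ifP => hd.
    apply: leq_trans (hc _ hd); rewrite -card_draws.
    apply: subset_leq_card; apply/subsetP => A; rewrite !inE => /andP[_ ->] //.
  rewrite leqn0 cards_eq0; apply/eqP/setP => A; rewrite !inE.
  by apply/negP => /andP[h1 /eqP h2]; rewrite -h2 h1 in hd.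
rewrite -(big_mkord predT (fun d => if d + 2 <= k then c else 0)).
case: (leqP (k - 1) #|U|.+1) => hk.
  rewrite (big_cat_nat _ (n := k - 1)) //= [X in _ + X]big1_seq ?addn0.
    rewrite (eq_big_nat _ _ (F2 := fun _ => c)) ?sum_nat_const_nat ?subn0 //.
    move=> d /andP[_ hd]; rewrite ifT //; lia.
  move=> d /andP[_]; rewrite mem_iota => hd; rewrite ifF //; lia.
apply: leq_trans (_ : \sum_(0 <= d < #|U|.+1) c <= _).
  by apply: leq_sum => d _; case: ifP.
rewrite sum_nat_const_nat subn0 leq_mul2r; apply/orP; right; lia.
Qed.

Section H.
Variable n : nat.
Hypothesis n2 : 1 < n.

Lemma Qn_sq k : Qn n k * Qn n k <= #|[set A : {set ('I_n + 'I_n)} | #|A| + 2 <= k]|.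
Proof.
set QS := [set B : {set 'I_n} | 2 * #|B| + 2 <= k].
have -> : Qn n k * Qn n k = #|setX QS QS| by rewrite cardsX.
pose f (p : {set 'I_n} * {set 'I_n}) : {set ('I_n + 'I_n)} := (inl @: p.1) :|: (inr @: p.2).
have hinj : injective f.
  have k1 : forall p, inl @^-1: (f p) = p.1.
    move=> p; apply/setP => x; rewrite !inE mem_imset; last by move=> ? ? [].
    have -> : (inl x \in inr @: p.2) = false by apply/imsetP => [[y _]].
    by rewrite orbF.
  have k2 : forall p, inr @^-1: (f p) = p.2.
    move=> p; apply/setP => x; rewrite !inE.
    have -> : (inr x \in inl @: p.1) = false by apply/imsetP => [[y _]].
    rewrite mem_imset //; by move=> ? ? [].
  move=> [a b] [c d] e.
  have ha := k1 (a, b); have hc := k1 (c, d); have hb := k2 (a, b); have hd := k2 (c, d).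
  rewrite e /= in ha hb. rewrite /= in hc hd. by rewrite -ha -hb hc hd.
rewrite -(card_imset _ hinj).
apply: subset_leq_card; apply/subsetP => A /imsetP [[a b]]; rewrite !inE /= => /andP[ha hb] ->.
rewrite /f /= cardsU.
have -> : inl @: a :&: inr @: b = set0.
  apply/setP => z; rewrite !inE; apply/negP => /andP[/imsetP [x _ ->] /imsetP [y _]] //.
rewrite cards0 subn0 !card_imset //; try by move=> ? ? [].
have L : forall x y, 2*x+2 <= k -> 2*y+2 <= k -> x+y+2 <= k by lia.
exact: L _ _ ha hb.
Qed.

End H.

Section H2.
Variable n : nat.
Hypothesis n2 : 1 < n.
Implicit Types X Y : {set 'I_(3*n)}.

Lemma Ak_sq k : 2 <= k < n -> Ak n k * Ak n k * (n * n) <= 900 * 'C(3 * n, k).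
Proof.
move=> hk.
apply: (leq_trans _ (small_ratio hk)).
have h1 := Ak_small n2 (_ : 1 <= k < n).
have h2 := Qn_sq n2 k.
have h3 : #|[set A : {set ('I_n + 'I_n)} | #|A| + 2 <= k]| <= (k - 1) * 'C(2 * n, k - 2).
  apply: sizes_bound => d hd.
  rewrite card_sum !card_ord.
  have -> : n + n = 2 * n by lia.
  apply: bin_mono; lia.
have h4 : Ak n k <= 4 * Qn n k by apply: h1; lia.
rewrite leq_mul2r; apply/orP; right.
apply: leq_trans (leq_mul h4 h4) _.
have -> : 4 * Qn n k * (4 * Qn n k) = 16 * (Qn n k * Qn n k) by rewrite ?mulnE; ring.
rewrite leq_mul2l; apply/orP; right.
exact: leq_trans h2 h3.
Qed.

Lemma Ak1 : Ak n 1 = 0.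
Proof.
have h := Ak_small n2 (_ : 1 <= 1 < n).
have : Qn n 1 = 0.
  apply/eqP; rewrite cards_eq0; apply/eqP/setP => B; rewrite !inE; lia.
move=> hq; move: (h (ltac:(lia))); rewrite hq; lia.
Qed.

Definition Z0 := Zs n :\ set0.

Lemma bad_witness (s : {perm 'I_(3 * n)}) : ~~ odd_bipartite (B_adj s) ->
  exists2 X, X \in Z0 & evenset (s @: X).
Proof.
rewrite /odd_bipartite negb_forall => /existsP [X].
rewrite negb_imply => /andP[hX0 /existsPn hv].
exists X.
  rewrite !inE hX0 /=; apply/forallP => v.
  have := hv (v, false); rewrite /B_adj /=.
  by [].
apply/forallP => v.
have := hv (v, true); rewrite /B_adj /=.
have -> : [set f in s @: X | edge_mem n v f] = s @: [set w in X | edge_mem n v (s w)].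
  apply/setP => f; rewrite inE.
  apply/andP/imsetP => [[/imsetP [w hw ->] he]|[w]].
    by exists w => //; rewrite inE hw.
  rewrite inE => /andP[hw he] ->; split => //; exact: imset_f.
by rewrite card_imset //; exact: perm_inj.
Qed.

End H2.


Lemma sum_ifn m n c : n <= m -> \sum_(k < m) (if k < n then c else 0) = n * c.
Proof.
move=> hnm.
rewrite -(big_mkord predT (fun k => if k < n then c else 0)).
rewrite (big_cat_nat _ (n := n)) //= [X in _ + X]big1_seq ?addn0.
  rewrite (eq_big_nat _ _ (F2 := fun _ => c)) ?sum_nat_const_nat ?subn0 //.
  by move=> d /andP[_ hd]; rewrite hd.
move=> d /andP[_]; rewrite mem_iota => hd; rewrite ifF //; lia.
Qed.

Section H3.
Variable n : nat.
Hypothesis n2 : 1 < n.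
Implicit Types X Y : {set 'I_(3*n)}.

Definition GX X := #|[set s : {perm 'I_(3*n)} | evenset (s @: X)]|.

Lemma GX_eq X : GX X * 'C(3*n, #|X|) = Ak n #|X| * (3*n)`!.
Proof.
rewrite /GX -sum1_card (eq_bigl (fun s : {perm 'I_(3*n)} => evenset (s @: X))); last by move=> s; rewrite inE.
rewrite (partition_big (fun s : {perm 'I_(3*n)} => s @: X)
   (fun Y => evenset Y && (#|Y| == #|X|))) /=; last first.
  move=> s hs; rewrite hs /= card_imset //; exact: perm_inj.
rewrite big_distrl /=.
rewrite (eq_bigr (fun _ => (3*n)`!)); last first.
  move=> Y /andP[hY /eqP hc].
  rewrite (eq_bigl (fun s => s \in [set s : {perm 'I_(3*n)} | s @: X == Y])); last first.
    move=> s; rewrite in_set; case: eqP => [->|]; by rewrite ?hY ?andbT ?andbF.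
  rewrite sum1_card.
  have := fiber_card (esym hc); rewrite card_ord => ->.
  by [].
rewrite sum_nat_const; congr (_ * _).
rewrite /Ak; apply: eq_card => Y; by rewrite !inE.
Qed.

Lemma C_pos X : 0 < 'C(3*n, #|X|).
Proof. rewrite bin_gt0; apply: leq_trans (max_card _) _; by rewrite card_ord. Qed.

Definition Gk k := Ak n k * (3*n)`! %/ 'C(3*n, k).

Lemma GX_val X : GX X = Gk #|X|.
Proof. by rewrite /Gk -GX_eq mulnK // C_pos. Qed.

End H3.

Section H4.
Variable n : nat.
Hypothesis n4 : 3 < n.
Implicit Types X Y : {set 'I_(3*n)}.

Lemma n2' : 1 < n. Proof. lia. Qed.

Definition badset := [set s : {perm 'I_(3*n)} | ~~ odd_bipartite (B_adj s)].

Lemma bad_le : #|badset| <= \sum_(X in Z0 n) GX X.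
Proof.
apply: union_bound => s; rewrite inE => hs.
exact: bad_witness hs.
Qed.

Lemma large_part : (\sum_(X in Z0 n | ~~ (#|X| < n)) GX X) * n <= 12 * (3*n)`!.
Proof.
set L := \sum_(X in Z0 n | _) _.
have hC : 0 < 'C(3*n, n) by rewrite bin_gt0; lia.
have h1 : L * 'C(3*n, n) <= expn 2 n.+1 * (expn 2 n.+1 * (3*n)`!).
  rewrite /L big_distrl /=.
  apply: leq_trans (_ : \sum_(X in Z0 n) expn 2 n.+1 * (3*n)`! <= _).
    rewrite [X in _ <= X](bigID (fun X => ~~ (#|X| < n))) /=.
    apply: leq_trans (leq_addr _ _).
    apply: leq_sum => X /andP[hX hl].
    have hXe : evenset X by move: hX; rewrite !inE => /andP[_].
    have hle := card_le2n n2' hXe.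
    apply: leq_trans (_ : GX X * 'C(3*n, #|X|) <= _).
      rewrite leq_mul2l; apply/orP; right; apply: bin_mid; rewrite hle andbT leqNgt //.
    rewrite GX_eq leq_mul2r; apply/orP; right.
    apply: leq_trans (Zs_card n2').
    apply: subset_leq_card; apply/subsetP => Y; rewrite inE => /andP[-> _] //.
  rewrite sum_nat_const leq_mul2r; apply/orP; right.
  apply: leq_trans (Zs_card n2').
  apply: subset_leq_card; apply/subsetP => Y; rewrite inE => /andP[_ ->] //.
have h2 : n * expn 4 n <= expn 6 n := pow46 n.
have h3 : expn 6 n <= 3 * 'C(3*n, n) := bin3_lower n.
have e : expn 2 n.+1 * expn 2 n.+1 = 4 * expn 4 n.
  by rewrite -expnMn expnS.
rewrite -(leq_pmul2r hC).
move: h1 h2 h3 e; move: ('C(3*n, n)) (expn 2 n.+1) (expn 4 n) (expn 6 n) ((3*n)`!)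
  => c a b d f h1 h2 h3 e.
have h4 : L * c * n <= a * (a * f) * n by rewrite leq_mul2r h1 orbT.
have e2 : a * (a * f) * n = 4 * (n * b) * f by rewrite mulnA e ?mulnE; ring.
have h5 : 4 * (n * b) * f <= 4 * (3 * c) * f.
  by rewrite leq_mul2r leq_mul2l (leq_trans h2 h3) !orbT.
have e3 : L * n * c = L * c * n by rewrite ?mulnE; ring.
have e4 : 4 * (3 * c) * f = 12 * f * c by rewrite ?mulnE; ring.
by rewrite e3 -e4; apply: leq_trans h4 _; rewrite e2.
Qed.

End H4.

Section H5.
Variable n : nat.
Hypothesis n4 : 3 < n.
Implicit Types X Y : {set 'I_(3*n)}.

Lemma small_term k : #|[set X in [set X in Z0 n | #|X| < n] | #|X| == k]| * Gk n k * (n * n)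
   <= (if k < n then 900 * (3*n)`! else 0).
Proof.
set c := #|_|.
case: (posnP c) => hc; first by rewrite hc.
have [X hX] : exists X, X \in [set X in [set X in Z0 n | #|X| < n] | #|X| == k].
  by apply/card_gt0P.
move: (hX); rewrite !inE => /andP[/andP[/andP[hX0 hXe] hXn] /eqP hXk].
have hkn : k < n by rewrite -hXk.
rewrite hkn.
have hk1 : 1 <= k.
  rewrite -hXk card_gt0; exact: hX0.
have hcA : c <= Ak n k.
  apply: subset_leq_card; apply/subsetP => Y; rewrite !inE.
  by move=> /andP[/andP[/andP[_ ->] _] ->].
have hG : Gk n k * 'C(3*n, k) = Ak n k * (3*n)`!.
  by rewrite -hXk -GX_val GX_eq.
have hC : 0 < 'C(3*n, k) by rewrite -hXk C_pos.
case: (ltnP k 2) => hk2.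
  have -> : k = 1 by lia.
  have : c <= 0 by rewrite -(Ak1 (n2' n4)); have -> : 1 = k by lia.
  lia.
have hsq := Ak_sq (n2' n4) (_ : 2 <= k < n).
rewrite -(leq_pmul2r hC).
move: hcA hG (hsq (ltac:(lia))) hC.
move: (Gk n k) (Ak n k) ('C(3*n, k)) ((3*n)`!) (n * n) => g a C f m hcA hG hs hC.
have s1 : c * g * m * C <= a * (g * C) * m.
  have -> : c * g * m * C = c * (g * C) * m by rewrite ?mulnE; ring.
  by rewrite leq_mul2r leq_mul2r hcA !orbT.
apply: leq_trans s1 _; rewrite hG.
have -> : a * (a * f) * m = (a * a * m) * f by rewrite ?mulnE; ring.
have -> : 900 * f * C = (900 * C) * f by rewrite ?mulnE; ring.
by rewrite leq_mul2r hs orbT.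
Qed.

Lemma small_part : (\sum_(X in Z0 n | #|X| < n) GX X) * n <= 900 * (3*n)`!.
Proof.
set S' := [set X in Z0 n | #|X| < n].
have e0 : \sum_(X in Z0 n | #|X| < n) GX X = \sum_(X in S') Gk n #|X|.
  rewrite (eq_bigl (fun X => X \in S')); last by move=> X; rewrite /S' !inE.
  apply: eq_bigr => X _; exact: GX_val.
rewrite e0 regroup card_ord.
have hn : 0 < n by lia.
rewrite -(leq_pmul2r hn) -mulnA big_distrl /=.
apply: leq_trans (_ : \sum_(k < (3*n).+1) (if k < n then 900 * (3*n)`! else 0) <= _).
  apply: leq_sum => k _; exact: small_term.
rewrite sum_ifn; last lia.
by rewrite mulnC.
Qed.

Lemma main_count : #|badset n| * n <= 912 * (3*n)`!.
Proof.
have h := bad_le n.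
rewrite (bigID (fun X => #|X| < n)) /= in h.
have h1 := small_part.
have h2 := large_part n4.
apply: leq_trans (_ : (\sum_(X in Z0 n | #|X| < n) GX X + \sum_(X in Z0 n | ~~ (#|X| < n)) GX X) * n <= _).
  by rewrite leq_mul2r h orbT.
rewrite mulnDl; lia.
Qed.

End H5.

Theorem mainTheorem6 :
  exists (C : R) (N : nat),
    forall n : nat, (2 <= n)%N -> (N <= n)%N ->
      (prob_not_odd n <= C * (ln (INR n) ^ 2) / INR n)%R.
Proof.
exists (INR 912), 4%N => n _ hn.
have hn3 : (3 < n)%N by [].
have hc := main_count hn3.
rewrite /badset in hc.
rewrite /prob_not_odd card_permT card_ord.
move: hc; set b := #|_|; set f := (3 * n)`! => hc.
have hf : (0 < INR f)%R by apply: lt_0_INR; apply/ltP; rewrite fact_gt0.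
have hnpos : (0 < INR n)%R by apply: lt_0_INR; apply/ltP; lia.
have H1 : (INR b * INR n <= INR 912 * INR f)%R.
  rewrite -!mult_INR; apply: le_INR; apply/leP; exact: hc.
have h4 : (4 <= INR n)%R.
  have := le_INR 4 n (ltac:(apply/leP; exact: hn)); simpl; lra.
have hl : (1 < ln (INR n))%R.
  rewrite -[X in (X < _)%R]ln_exp.
  apply: ln_increasing; first exact: exp_pos.
  have := exp_le_3; lra.
have hL : (1 <= ln (INR n) ^ 2)%R by simpl; nra.
have hK : (0 <= INR 912)%R by apply: pos_INR.
have e1 : (INR b / INR f = (INR b * INR n) * / (INR f * INR n))%R by field; lra.
have e2 : ((INR 912 * INR f) * / (INR f * INR n) = INR 912 / INR n)%R by field; lra.
rewrite e1.
apply: Rle_trans (_ : ((INR 912 * INR f) * / (INR f * INR n) <= _)%R).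
  apply: Rmult_le_compat_r => //.
  apply: Rlt_le; apply: Rinv_0_lt_compat; nra.
rewrite e2 /Rdiv.
apply: Rmult_le_compat_r; first by apply: Rlt_le; apply: Rinv_0_lt_compat.
nra.
Qed.
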